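(* Let $n_\text{in}\ge1$, $n_\text{out}=2$, $\mathbf{W}\in\mathbb{R}^{2\times n_\text{in}}$, $\mathbf{b}\in\mathbb{R}^{2}$, $\mathbf{c}\in\mathbb{R}^{n_\text{in}}$, $\mathbf{U}=[\mathbf{u}_1\,\ldots\,\mathbf{u}_{n_\text{in}}]\in\mathbb{R}^{n_\text{in}\times n_\text{in}}$, and $r\in[0,1]$. Let $\mathcal{P}(\mathbf{U})=\{\mathbf{c}+\sum_j\lambda_j\mathbf{u}_j:\lambda\in[0,1]^{n_\text{in}}\}$, $\mathcal{P}(\mathbf{U}^L)=\{\mathbf{c}+\lambda_1 r\mathbf{u}_1+\sum_{j\ge2}\lambda_j\mathbf{u}_j:\lambda\in[0,1]^{n_\text{in}}\}$, $\mathcal{P}(\mathbf{U}^R)=\{\mathbf{c}+r\mathbf{u}_1+\lambda_1(1-r)\mathbf{u}_1+\sum_{j\ge2}\lambda_j\mathbf{u}_j:\lambda\in[0,1]^{n_\text{in}}\}$, and let $\mathcal{P}(\mathbf{V}),\mathcal{P}(\mathbf{V}^L),\mathcal{P}(\mathbf{V}^R)$ be their respective images under $\mathbf{x}\mapsto\mathbf{W}\mathbf{x}+\mathbf{b}$. Let $\mathbf{v}_1=\mathbf{W}\mathbf{u}_1$ with coordinates $v_{1,1},v_{1,2}$. Then \[ \mathrm{Vol}(\mathcal{B}(\mathbf{V}))-\mathrm{Vol}\big(\mathcal{B}(\mathbf{V}^L)\cup\mathcal{B}(\mathbf{V}^R)\big)=2r(1-r)\,|v_{1,1}|\,|v_{1,2}|.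 \]
   Context: For a parallelotope $\mathcal{P}\subset\mathbb{R}^{n_\text{out}}$, $\mathcal{B}(\cdot)$ denotes the smallest axis-aligned hyperrectangle containing it (the Cartesian product over coordinates of the interval between the minimal and maximal coordinate of its vertices); $\mathrm{Vol}$ is Lebesgue area/volume. *)

(* Defs.v *)
From HB Require Import structures.
From mathcomp Require Import all_boot all_order all_algebra.
From mathcomp Require Import all_classical all_reals all_analysis.
Set Implicit Arguments. Unset Strict Implicit. Unset Printing Implicit Defensive.
Import Order.TTheory GRing.Theory Num.Theory.
Local Open Scope classical_set_scope.
Local Open Scope ring_scope.

Definition paral (R : realType) (m n : nat) (c : 'cV[R]_m) (G : 'M[R]_(m, n))
  : set 'cV[R]_m :=
  [set c + G *m lam | lam in [set lam : 'cV[R]_n | forall j, 0 <= lam j 0 <= 1]].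

Definition affimg (R : realType) (m k : nat) (W : 'M[R]_(k, m)) (b : 'cV[R]_k)
  (P : set 'cV[R]_m) : set 'cV[R]_k := [set W *m x + b | x in P].

Definition scale_col0 (R : realType) (m n : nat) (s : R) (U : 'M[R]_(m, n.+1))
  : 'M[R]_(m, n.+1) :=
  \matrix_(i, j) (if j == ord0 then s * U i j else U i j).

(* Smallest axis-aligned box of a set P in R^2 (as a subset of R * R):
   product over the two coordinates of [min_P x_k, max_P x_k]; for a compact
   P (e.g. a parallelotope) the coordinate-wise interval between minimal and
   maximal coordinate is exactly the set of values lying between two
   coordinates attained on P. *)
Definition bbox2 (R : realType) (P : set 'cV[R]_2) : set (R * R) :=
  [set xy | (exists p q, P p /\ P q /\ p 0 0 <= xy.1 <= q 0 0) /\
            (exists p q, P p /\ P q /\ p 1 0 <= xy.2 <= q 1 0)].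

Definition leb2 (R : realType) :=
  ((@lebesgue_measure R) \x (@lebesgue_measure R))%E.

(* Main.v *)
Require Import Defs.
From HB Require Import structures.
From mathcomp Require Import all_boot all_order all_algebra.
From mathcomp Require Import all_classical all_reals all_analysis.
From mathcomp Require Import ring lra.
Import Order.TTheory GRing.Theory Num.Theory.
Local Open Scope classical_set_scope.
Local Open Scope ring_scope.
Set Implicit Arguments.

Section S.
Variable R : realType.

Definition rect (x y u v : R) : set (R * R) := `[x, y] `*` `[u, v].

Lemma leb_itv (x y : R) : x <= y -> lebesgue_measure (`[x, y] : set R) = (y - x)%:E.
Proof.
move=> xy; rewrite lebesgue_measure_itv /= lte_fin.
case: ltgtP xy => //; try by rewrite EFinN EFinD.
by move=> -> _; rewrite subrr.
Qed.

Lemma mrect x y u v : measurable (rect x y u v).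
Proof. apply: measurableX; exact: measurable_itv. Qed.

Lemma leb2_rect x y u v : x <= y -> u <= v ->
  leb2 (rect x y u v) = ((y - x) * (v - u))%:E.
Proof.
move=> xy uv; rewrite /leb2 /rect product_measure1E; try exact: measurable_itv.
transitivity ((y - x)%:E * (v - u)%:E)%E; last by rewrite EFinM.
congr (_ * _)%E; [exact: leb_itv|exact: leb_itv].
Qed.

Lemma rectI x1 y1 u1 v1 x2 y2 u2 v2 :
  rect x1 y1 u1 v1 `&` rect x2 y2 u2 v2 =
  rect (Num.max x1 x2) (Num.min y1 y2) (Num.max u1 u2) (Num.min v1 v2).
Proof.
rewrite /rect -setXI; congr (_ `*` _); apply/seteqP; split => z /=; rewrite !in_itv /= ge_max le_min.
all: by [move=> [/andP[-> ->] /andP[-> ->]] | case/and3P=> /andP[-> ->] -> ->].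
Qed.

Lemma leb2U x1 y1 u1 v1 x2 y2 u2 v2 : x1 <= y1 -> u1 <= v1 ->
  leb2 (rect x1 y1 u1 v1 `|` rect x2 y2 u2 v2) =
  (leb2 (rect x1 y1 u1 v1) + leb2 (rect x2 y2 u2 v2) -
   leb2 (rect x1 y1 u1 v1 `&` rect x2 y2 u2 v2))%E.
Proof.
move=> h1 h2; rewrite /leb2 measureUfinl //.
- by apply: measurableX; exact: measurable_itv.
- by apply: measurableX; exact: measurable_itv.
have E := @leb2_rect x1 y1 u1 v1 h1 h2; rewrite /leb2 in E.
suff : ((lebesgue_measure \x lebesgue_measure)%E (rect x1 y1 u1 v1) < +oo)%E by []. 
by rewrite E ltry.
Qed.

Definition lo {N} (M : 'M[R]_(2, N)) (e : 'cV[R]_2) (k : 'I_2) :=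
  e k 0 + \sum_j Num.min 0 (M k j).
Definition hi {N} (M : 'M[R]_(2, N)) (e : 'cV[R]_2) (k : 'I_2) :=
  e k 0 + \sum_j Num.max 0 (M k j).

Lemma entry m N (W : 'M[R]_(2, m)) b c (G : 'M[R]_(m, N)) (lam : 'cV[R]_N) k :
  (W *m (c + G *m lam) + b) k 0 = (W *m c + b) k 0 + \sum_j (W *m G) k j * lam j 0.
Proof.
have -> : W *m (c + G *m lam) + b = (W *m c + b) + (W *m G) *m lam.
  by rewrite mulmxDr mulmxA addrAC.
by rewrite [LHS]mxE [X in _ + X]mxE.
Qed.

Lemma min_le (v l : R) : 0 <= l <= 1 -> Num.min 0 v <= v * l.
Proof.
case/andP=> l0 l1; have [h|h] := leP 0 v.
  by nra.
by nra.
Qed.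

Lemma le_max (v l : R) : 0 <= l <= 1 -> v * l <= Num.max 0 v.
Proof.
case/andP=> l0 l1; have [h|h] := leP 0 v.
  by nra.
by nra.
Qed.

Lemma bbox_gen m N (W : 'M[R]_(2, m)) b c (G : 'M[R]_(m, N)) :
  bbox2 (affimg W b (paral c G)) =
  rect (lo (W *m G) (W *m c + b) 0) (hi (W *m G) (W *m c + b) 0)
       (lo (W *m G) (W *m c + b) 1) (hi (W *m G) (W *m c + b) 1).
Proof.
set P := affimg W b (paral c G).
have bnd : forall x k, P x -> lo (W *m G) (W *m c + b) k <= x k 0 <= hi (W *m G) (W *m c + b) k.
  move=> x k [_ [lam hlam <-] <-]; rewrite entry /lo /hi lerD2l lerD2l.
  apply/andP; split; apply: ler_sum => j _; [exact: min_le | exact: le_max].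
have wlo : forall k, exists p, P p /\ p k 0 = lo (W *m G) (W *m c + b) k.
  move=> k; set lam : 'cV[R]_N := \col_j (if (W *m G) k j < 0 then 1 else 0).
  exists (W *m (c + G *m lam) + b); split.
    exists (c + G *m lam) => //; exists lam => // j.
    by rewrite mxE; case: ifP => _; rewrite ?lexx ?ler01.
  rewrite entry /lo /lam; move: (W *m G) => M; congr (_ + _).
  apply: eq_bigr => j _; rewrite mxE.
  by case: (ltP (M k j) 0) => h; rewrite ?mulr1 ?mulr0.
have whi : forall k, exists p, P p /\ p k 0 = hi (W *m G) (W *m c + b) k.
  move=> k; set lam : 'cV[R]_N := \col_j (if 0 < (W *m G) k j then 1 else 0).
  exists (W *m (c + G *m lam) + b); split.
    exists (c + G *m lam) => //; exists lam => // j.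
    by rewrite mxE; case: ifP => _; rewrite ?lexx ?ler01.
  rewrite entry /hi /lam; move: (W *m G) => M; congr (_ + _).
  apply: eq_bigr => j _; rewrite mxE.
  by case: (ltP 0 (M k j)) => h; rewrite ?mulr1 ?mulr0.
rewrite /bbox2 /rect; apply/seteqP; split => -[y1 y2] /=.
  move=> [[p [q [Pp [Pq /andP[h1 h2]]]]] [p' [q' [Pp' [Pq' /andP[h1' h2']]]]]].
  split; rewrite in_itv /=; apply/andP; split.
  - by case/andP: (bnd _ 0 Pp) => + _; move/le_trans; apply.
  - by case/andP: (bnd _ 0 Pq) => _; apply: le_trans.
  - by case/andP: (bnd _ 1 Pp') => + _; move/le_trans; apply.
  - by case/andP: (bnd _ 1 Pq') => _; apply: le_trans.
rewrite !in_itv /= => -[/andP[h1 h2] /andP[h1' h2']].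
have [p0 [Pp0 e0]] := wlo 0; have [q0 [Pq0 f0]] := whi 0.
have [p1 [Pp1 e1]] := wlo 1; have [q1 [Pq1 f1]] := whi 1.
split.
  by exists p0, q0; rewrite e0 f0 h1 h2.
by exists p1, q1; rewrite e1 f1 h1' h2'.
Qed.

Section Spec.
Variables (n : nat) (W : 'M[R]_(2, n.+1)) (U : 'M[R]_(n.+1)).
Definition av k := (W *m col ord0 U) k 0.
Definition mm k := \sum_(i < n) Num.min 0 ((W *m U) k (lift ord0 i)).
Definition MM k := \sum_(i < n) Num.max 0 ((W *m U) k (lift ord0 i)).

Lemma av_E k : (W *m U) k ord0 = av k.
Proof. by rewrite /av !mxE; apply: eq_bigr => i _; rewrite mxE. Qed.

Lemma scale_entry s k j : (W *m scale_col0 s U) k j =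
  if j == ord0 then s * (W *m U) k j else (W *m U) k j.
Proof.
rewrite !mxE; case: eqP => [->|hj].
  by rewrite mulr_sumr; apply: eq_bigr => i _; rewrite mxE eqxx mulrCA.
by apply: eq_bigr => i _; rewrite mxE (introF eqP hj).
Qed.

Lemma lo_scale s e k : 0 <= s ->
  lo (W *m scale_col0 s U) e k = e k 0 + s * Num.min 0 (av k) + mm k.
Proof.
move=> s0; rewrite /lo big_ord_recl scale_entry eqxx av_E addrA; congr (_ + _ + _).
  by rewrite minr_pMr // mulr0.
apply: eq_bigr => i _; rewrite scale_entry eq_sym (negbTE (neq_lift _ _)) //.
Qed.

Lemma hi_scale s e k : 0 <= s ->
  hi (W *m scale_col0 s U) e k = e k 0 + s * Num.max 0 (av k) + MM k.
Proof.
move=> s0; rewrite /hi big_ord_recl scale_entry eqxx av_E addrA; congr (_ + _ + _).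
  by rewrite maxr_pMr // mulr0.
apply: eq_bigr => i _; rewrite scale_entry eq_sym (negbTE (neq_lift _ _)) //.
Qed.

Lemma scale1 : scale_col0 1 U = U.
Proof. by apply/matrixP => i j; rewrite mxE; case: eqP => _; rewrite ?mul1r. Qed.

Lemma base_R (c : 'cV[R]_n.+1) b r k :
  (W *m (c + r *: col ord0 U) + b) k 0 = (W *m c + b) k 0 + r * av k.
Proof. rewrite mulmxDr addrAC -scalemxAr [LHS]mxE; congr (_ + _); by rewrite mxE. Qed.

Lemma mm_le k : mm k <= MM k.
Proof. apply: ler_sum => i _; set v := (W *m U) k _; case: (leP 0 v) => h; lra. Qed.
End Spec.

Lemma itv_lo (a B m r : R) : 0 <= r <= 1 ->
  Num.max (B + r * Num.min 0 a + m) (B + r * a + (1 - r) * Num.min 0 a + m) = B + r * a + m.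
Proof.
case/andP=> r0 r1; case: (leP 0 a) => h.
  by rewrite max_r; [rewrite !mulr0 addr0 | rewrite !mulr0 addr0; nra].
by rewrite max_l; [|nra].
Qed.

Lemma itv_hi (a B M r : R) : 0 <= r <= 1 ->
  Num.min (B + r * Num.max 0 a + M) (B + r * a + (1 - r) * Num.max 0 a + M) = B + r * a + M.
Proof.
case/andP=> r0 r1; case: (leP 0 a) => h.
  by rewrite min_l; [|nra].
by rewrite min_r; [rewrite !mulr0 addr0 | rewrite !mulr0 addr0; nra].
Qed.

Lemma norm_mm (a : R) : `|a| = Num.max 0 a - Num.min 0 a.
Proof. case: (leP 0 a) => h; [rewrite ger0_norm //; lra | rewrite ltr0_norm //; lra]. Qed.

Lemma Z_le_A (a : R) : Num.min 0 a <= 0 <= Num.max 0 a.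
Proof. by case: (leP 0 a) => h; apply/andP; split; lra. Qed.

End S.
Unset Implicit Arguments.

Theorem corollary1 (R : realType) (n : nat) (W : 'M[R]_(2, n.+1)) (b : 'cV[R]_2)
  (c : 'cV[R]_(n.+1)) (U : 'M[R]_(n.+1)) (r : R) (hr0 : 0 <= r) (hr1 : r <= 1) :
  let u1 := col ord0 U in
  let PV := affimg W b (paral c U) in
  let PVL := affimg W b (paral c (scale_col0 r U)) in
  let PVR := affimg W b (paral (c + r *: u1) (scale_col0 (1 - r) U)) in
  let v1 := W *m u1 in
  (@leb2 R (bbox2 PV) - @leb2 R (bbox2 PVL `|` bbox2 PVR))%E =
  (2 * r * (1 - r) * `|v1 0 0| * `|v1 1 0|)%:E.
Proof.
move=> u1 PV PVL PVR v1.
have r1' : 0 <= 1 - r by lra.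
have r01 : 0 <= r <= 1 by apply/andP.
have e1 : paral c U = paral c (scale_col0 1 U) by rewrite scale1.
rewrite /PV /PVL /PVR e1 !bbox_gen !lo_scale // !hi_scale // /u1 !base_R.
change (v1 0 0) with (@av _ _ W U 0); change (v1 1 0) with (@av _ _ W U 1).
have := @Z_le_A _ (@av _ _ W U 0); have := @Z_le_A _ (@av _ _ W U 1).
have := @mm_le _ _ W U 0; have := @mm_le _ _ W U 1.
move=> hm1 hm0 /andP[hz1 ha1] /andP[hz0 ha0].
rewrite leb2U; last 2 first.
- nra.
- nra.
rewrite (@rectI R).
rewrite !(@itv_lo R) //.
rewrite !(@itv_hi R) //.
rewrite !(@leb2_rect R).
  rewrite -!(@EFinD R); congr (_%:E).
  rewrite !(@norm_mm R); ring.
all: nra.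
Qed.
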